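(* Let $\varphi:X\to\mathbb R$ be Lipschitz continuous. Every calibrated subaction $u$ of $\varphi$ satisfies \[u(\underline{y})=\inf_{\underline{x}\in\Omega_\varphi}\big(H_\varphi(\underline{x},\underline{y})+u(\underline{x})\big)\quad\text{for every }\underline{y}\in X.\]
   Context: $X=[0,1]^{\mathbb N_0}$ with metric $d_X(\underline{x},\underline{y})=\sum_{i\ge0}|x_i-y_i|/2^{i+1}$ and shift $\sigma(\underline{x})_i=x_{i+1}$. $\alpha_\varphi=\inf_\mu\int\varphi\,d\mu$ over $\sigma$-invariant Borel probability measures. $B(\underline{x},\underline{y},n;\varepsilon)=\{\underline{z}: d_X(\underline{x},\underline{z})<\varepsilon,\ d_X(\sigma^n\underline{z},\underline{y})<\varepsilon\}$. Mañé potential $S_\varphi(\underline{x},\underline{y})=\lim_{\varepsilon\to0}\inf\{\sum_{i=0}^{n-1}(\varphi(\sigma^i\underline{z})-\alpha_\varphi): n\in\mathbb N,\ \underline{z}\in B(\underline{x},\underline{y},n;\varepsilon)\}$; Peierls barrier $H_\varphi(\underline{x},\underline{y})=\lim_{\varepsilon\to0}\liminf_{n\to\infty}\inf\{\sum_{i=0}^{n-1}(\varphi(\sigma^i\underline{z})-\alpha_\varphi): \underline{z}\in B(\underline{x},\underline{y},n;\varepsilon)\}\in\mathbb R\cup\{+\infty\}$; Aubry set $\Omega_\varphi=\{\underline{x}: S_\varphi(\underline{x},\underline{x})=0\}$. A subaction of $\varphi$ is a continuous $u:X\to\mathbb R$ with $u(\underline{x})+\varphi(\underline{x})\ge u(\sigma\underline{x})+\alpha_\varphi$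 for all $\underline{x}$; it is calibrated if moreover $\min_{\sigma(\underline{y})=\underline{x}}(\varphi(\underline{y})+u(\underline{y}))=u(\underline{x})+\alpha_\varphi$ for every $\underline{x}\in X$. *)

(* Defs.v *)
From HB Require Import structures.
From mathcomp Require Import all_boot all_order all_algebra.
From mathcomp Require Import all_classical all_reals all_analysis.
Set Implicit Arguments. Unset Strict Implicit. Unset Printing Implicit Defensive.
Import Order.TTheory GRing.Theory Num.Theory.
Local Open Scope classical_set_scope.
Local Open Scope ring_scope.

Section Shift.
Variable R : realType.

Record Xt := MkX { xval : nat -> R ; xprop : forall i, 0 <= xval i <= 1 }.

Lemma x0_prop : forall i : nat, 0 <= (fun _ : nat => (0:R)) i <= 1.
Proof. by move=> i; rewrite lexx ler01. Qed.

HB.instance Definition _ := gen_eqMixin Xt.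
HB.instance Definition _ := gen_choiceMixin Xt.
HB.instance Definition _ := isPointed.Build Xt (MkX x0_prop).

Definition dX (x y : Xt) : R :=
  limn (fun n : nat => \sum_(0 <= i < n) (`|xval x i - xval y i| / 2 ^+ i.+1)).

Definition shift (x : Xt) : Xt := MkX (fun i => xprop x i.+1).

Definition dX_open (A : set Xt) : Prop :=
  forall x, A x -> exists2 e : R, 0 < e & forall z, dX x z < e -> A z.

Definition XB := g_sigma_algebraType dX_open.

Definition invariant (mu : probability XB R) : Prop :=
  forall A : set XB, measurable A -> mu (shift @^-1` A) = mu A.

Definition alpha (phi : Xt -> R) : R :=
  fine (ereal_inf [set (\int[mu]_x (phi x)%:E)%E | mu in [set mu | invariant mu]]).

Definition Bset (x y : Xt) (n : nat) (eps : R) : set Xt :=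
  [set z | dX x z < eps /\ dX (iter n shift z) y < eps].

Definition birk (phi : Xt -> R) (n : nat) (z : Xt) : R :=
  \sum_(0 <= i < n) (phi (iter i shift z) - alpha phi).

Definition mane (phi : Xt -> R) (x y : Xt) : \bar R :=
  lim ((fun eps : R => ereal_inf
          [set r | exists n, exists z, (0 < n)%N /\ Bset x y n eps z /\ r = (birk phi n z)%:E])
       @ 0^'+).

Definition peierls (phi : Xt -> R) (x y : Xt) : \bar R :=
  lim ((fun eps : R => limn_einf (fun n : nat =>
          ereal_inf [set (birk phi n z)%:E | z in Bset x y n eps]))
       @ 0^'+).

Definition aubry (phi : Xt -> R) : set Xt := [set x | mane phi x x = 0%E].

Definition dX_continuous (u : Xt -> R) : Prop :=
  forall x (e : R), 0 < e -> exists2 d : R, 0 < d &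
    forall z, dX x z < d -> `|u x - u z| < e.

Definition dX_lipschitz (phi : Xt -> R) : Prop :=
  exists L : R, forall x y, `|phi x - phi y| <= L * dX x y.

Definition subaction (phi u : Xt -> R) : Prop :=
  dX_continuous u /\ forall x, u x + phi x >= u (shift x) + alpha phi.

Definition calibrated_subaction (phi u : Xt -> R) : Prop :=
  subaction phi u /\
  forall x, (exists2 y, shift y = x & phi y + u y = u x + alpha phi) /\
            (forall y, shift y = x -> u x + alpha phi <= phi y + u y).

End Shift.

(* Main.v *)
Require Import Defs.
From HB Require Import structures.
From mathcomp Require Import all_boot all_order all_algebra.
From mathcomp Require Import all_classical all_reals all_analysis.
From mathcomp Require Import ring lra.
Import Order.TTheory GRing.Theory Num.Theory.
Local Open Scope classical_set_scope.
Local Open Scope ring_scope.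

Section Aux.
Variable R : realType.
Local Notation X := (Xt R).

Lemma dX_sym (x y : X) : dX x y = dX y x.
Proof.
rewrite /dX; have -> // : (fun n : nat => \sum_(0 <= i < n) (`|xval x i - xval y i| / 2 ^+ i.+1)) =
  (fun n : nat => \sum_(0 <= i < n) (`|xval y i - xval x i| / (2:R) ^+ i.+1)).
by apply: funext => n; apply: eq_bigr => i _; rewrite distrC.
Qed.

Lemma dX_refl (x : X) : dX x x = 0.
Proof.
rewrite /dX (_ : (fun n => _) = fun _ => 0); first by rewrite lim_cst.

apply: funext => n; rewrite big1 // => i _.
by rewrite subrr normr0 mul0r.
Qed.

Lemma geo (k m : nat) : (k <= m)%N ->
  \sum_(k <= i < m) ((2:R) ^+ i.+1)^-1 = (2 ^+ k)^-1 - (2 ^+ m)^-1.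
Proof.
elim: m => [|m IH]; first by rewrite leqn0 => /eqP ->; rewrite big_geq // subrr.
rewrite leq_eqVlt => /orP[/eqP ->|]; first by rewrite big_geq // subrr.
rewrite ltnS => km; rewrite big_nat_recr //= IH // exprS.
have h : (2:R) ^+ m != 0 by rewrite expf_neq0.
field; by rewrite h expf_neq0.
Qed.

Lemma dX_le (x z : X) (N : nat) (eta : R) : 0 <= eta ->
  (forall i, (i < N)%N -> `|xval x i - xval z i| <= eta) ->
  dX x z <= eta + (2 ^+ N)^-1.
Proof.
move=> eta0 H.
set S := fun n : nat => \sum_(0 <= i < n) (`|xval x i - xval z i| / 2 ^+ i.+1).
have t0 i : 0 <= `|xval x i - xval z i| / (2:R) ^+ i.+1.
  by rewrite divr_ge0.
have t1 i : `|xval x i - xval z i| / (2:R) ^+ i.+1 <= ((2:R) ^+ i.+1)^-1.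
  rewrite -[X in _ <= X]mul1r ler_wpM2r // ?invr_ge0 ?exprn_ge0 //.
  have := xprop x i; have := xprop z i.
  move=> /andP[? ?] /andP[? ?]; rewrite ler_norml; apply/andP; split; lra.
have Smono : {homo S : n m / (n <= m)%N >-> n <= m}.
  move=> n m nm; rewrite /S (big_cat_nat (leq0n n) nm) /= lerDl.
  by apply: sumr_ge0 => i _.
have Sb : forall n, S n <= 1.
  move=> n; apply: le_trans (_ : \sum_(0 <= i < n) ((2:R) ^+ i.+1)^-1 <= 1).
    by apply: ler_sum => i _.
  rewrite geo // expr0 invr1 lerBlDr lerDl invr_ge0 exprn_ge0 //.
have cS : cvgn S.
  apply: nondecreasing_is_cvgn => //; exists 1 => _ [n _ <-]; exact: Sb.
apply: limr_le => //; exists N => // m /= Nm.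
rewrite /S (big_cat_nat (leq0n N) Nm) /=; apply: lerD.
  apply: le_trans (_ : \sum_(0 <= i < N) (eta * ((2:R) ^+ i.+1)^-1) <= _).
    rewrite big_nat_cond [X in _ <= X]big_nat_cond.
    apply: ler_sum => i /andP[/andP[_ iN] _].
    by rewrite ler_wpM2r // ?invr_ge0 ?exprn_ge0 // H.
  by rewrite -mulr_sumr geo // expr0 invr1 ler_piMr // lerBlDr lerDl ?invr_ge0 ?exprn_ge0.
apply: le_trans (_ : \sum_(N <= i < m) ((2:R) ^+ i.+1)^-1 <= _).
  by apply: ler_sum => i _.
by rewrite geo // lerBlDr lerDl ?invr_ge0 ?exprn_ge0.
Qed.

End Aux.


Section Aux2.
Variable R : realType.
Local Notation X := (Xt R).

Lemma lim_noninc (F : R -> \bar R) :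
  (forall a b : R, 0 < a -> a <= b -> (F b <= F a)%E) ->
  lim (F @ 0^'+) = ereal_sup [set F e | e in [set e : R | 0 < e]].
Proof.
move=> Fm.
have := @nonincreasing_at_right_cvge R F 0 (BInfty R false) isT.
have hm : {in Interval (BRight 0) (BInfty R false) &, nonincreasing_fun F}.
  move=> a b; rewrite !in_itv /= !andbT => a0 b0 ab; exact: Fm.
move=> /(_ hm) h; apply: cvg_lim => //.
suff <- : [set F x | x in `]0, +oo[] = [set F e | e in [set e : R | 0 < e]] by [].
apply/seteqP; split => _ [e He <-]; exists e => //; move: He => /=;
  by rewrite ?in_itv /= ?andbT.
Qed.

Lemma einf_ge (a : (\bar R)^nat) c : (forall n, c <= a n)%E -> (c <= limn_einf a)%E.
Proof.
move=> H; rewrite limn_einf_lim; apply: lime_ge; first exact: is_cvg_einfs.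
by apply: nearW => n; apply: le_ereal_inf_tmp => _ [k _ <-]; exact: H.
Qed.

Lemma einf_le (a : (\bar R)^nat) c :
  (forall N, exists n, (N <= n)%N /\ (a n <= c)%E) -> (limn_einf a <= c)%E.
Proof.
move=> H; rewrite limn_einf_lim; apply: lime_le; first exact: is_cvg_einfs.
apply: nearW => N; have [n [Nn Hn]] := H N; apply: le_trans Hn.
by apply: ereal_inf_lbound; exists n.
Qed.

Lemma einf_mono (a b : (\bar R)^nat) :
  (forall n, a n <= b n)%E -> (limn_einf a <= limn_einf b)%E.
Proof.
move=> H; rewrite !limn_einf_lim; apply: lee_lim; try exact: is_cvg_einfs.
apply: nearW => n; apply: le_ereal_inf_tmp => _ [k Hk <-].
by apply: le_trans (H k); apply: ereal_inf_lbound; exists k.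
Qed.

End Aux2.

Import numFieldNormedType.Exports.


Section Aux3.
Variable R : realType.
Local Notation X := (Xt R).
Definition KR : nat -> topologicalType := fun _ => Topological.clone (Num.NumDomain.sort R) _.
Local Notation PT := (prod_topology KR).

Lemma cpt01 : compact [set x : R | 0 <= x <= 1].
Proof.
have := @segment_compact R 0 1.
by congr compact; apply/seteqP; split => x /=; rewrite in_itv.
Qed.

Lemma nbhs_fin (p : PT) (eta : R) K : 0 < eta ->
  nbhs p [set f : PT | forall i, (i < K)%N -> `|p i - f i| < eta].
Proof.
move=> eta0; elim: K => [|K IH].
  by apply: filterS filterT => f _ i.
have hK : nbhs p (proj K @^-1` ball (p K) eta).
  have := @proj_continuous nat KR K p _ (nbhsx_ballx (p K) eta eta0).
  by apply.
apply: filterS (filterI IH hK) => f [H1 H2] i; rewrite ltnS leq_eqVlt.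
case/orP => [/eqP ->|]; last exact: H1.
by move: H2; rewrite /= /ball /=.
Qed.

Lemma small_pow (e : R) : 0 < e -> exists M : nat, (2 ^+ M)^-1 < e / 3.
Proof.
move=> e0; set M := Num.Def.archi_bound (3 / e); exists M.
have h1 : 3 / e < M%:R by apply: archi_boundP; rewrite divr_ge0 // ltW.
have h2 : (M%:R : R) < 2 ^+ M by rewrite -natrX ltr_nat ltn_expl.
rewrite -[e / 3]invf_div ltf_pV2 ?posrE ?exprn_gt0 ?divr_gt0 //.
exact: lt_trans h1 h2.
Qed.

Lemma cluster_seq (s : nat -> X) : exists x : X, forall e, 0 < e ->
  forall N, exists n, (N <= n)%N /\ dX x (s n) < e.
Proof.
have cpt := @tychonoff nat KR (fun _ => [set x : R | 0 <= x <= 1]) (fun _ => cpt01).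
pose g : nat -> PT := fun n => xval (s n).
have [] := cpt (g @ \oo) _ _.
  by exists 0%N => // n _ i; exact: xprop.
move=> p [Ap clp].
exists (MkX (fun i => Ap i)) => e e0 N.
have [M HM] := small_pow e e0.
have nb := nbhs_fin p (e / 3) M (divr_gt0 e0 (ltr0n _ 3)).
have [|q [[n [Nn ->]] Hq]] := clp [set q | exists n, (N <= n)%N /\ q = g n] _ _ nb.
  by exists N => // n /= Nn; exists n.
exists n; split => //.
apply: le_lt_trans (@dX_le R _ (s n) M (e / 3) _ _) _.
- by rewrite divr_ge0 // ltW.
- by move=> i iM; apply: ltW; exact: Hq.
- lra.
Qed.

End Aux3.


Lemma birkS (R : realType) (phi : Xt R -> R) n z :
  birk phi n.+1 z = birk phi n z + (phi (iter n (@Defs.shift _) z) - alpha phi).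
Proof. by rewrite /birk big_nat_recr. Qed.

Lemma birk0 (R : realType) (phi : Xt R -> R) z : birk phi 0 z = 0.
Proof. by rewrite /birk big_geq. Qed.

Theorem theorem2p12 (R : realType) (phi : Xt R -> R) (u : Xt R -> R) :
  dX_lipschitz phi -> calibrated_subaction phi u ->
  forall y : Xt R,
    (u y)%:E = ereal_inf [set (peierls phi x y + (u x)%:E)%E | x in aubry phi].
Proof.
move=> _ [[ucont usub] hcal] y.
have [pre [Hpre1 Hpre2]] : exists pre : Xt R -> Xt R, (forall x, (@Defs.shift _) (pre x) = x) /\
    (forall x, phi (pre x) + u (pre x) = u x + alpha phi).
  have /choice [pre Hp] : forall x, exists z, (@Defs.shift _) z = x /\ phi z + u z = u x + alpha phi.
    by move=> x; have [[z ? ?] _] := hcal x; exists z.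
  by exists pre; split => x; have [] := Hp x.
pose yb n := iter n pre y.
have birk_lb : forall n z, u (iter n (@Defs.shift _) z) - u z <= birk phi n z.
  elim=> [|n IH] z; first by rewrite birk0 /= subrr.
  rewrite birkS iterS; have := usub (iter n (@Defs.shift _) z); have := IH z; lra.
have yb_shift : forall k n, iter k (@Defs.shift _) (yb (n + k)%N) = yb n.
  elim=> [|k IH] n; first by rewrite addn0.
  by rewrite addnS iterSr /yb iterS Hpre1 IH.
have yb_birk : forall k n, birk phi k (yb (n + k)%N) = u (yb n) - u (yb (n + k)%N).
  elim=> [|k IH] n; first by rewrite birk0 addn0 subrr.
  rewrite birkS -addSnnS IH yb_shift /yb iterS.
  have := Hpre2 (iter n pre y); lra.
have Gmono : forall x (a b : R), 0 < a -> a <= b ->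
   (limn_einf (fun n => ereal_inf [set (birk phi n z)%:E | z in Bset x y n b]) <=
    limn_einf (fun n => ereal_inf [set (birk phi n z)%:E | z in Bset x y n a]))%E.
  move=> x a b a0 ab; apply: einf_mono => n; apply: le_ereal_inf_tmp.
  move=> _ [z [H1 H2] <-]; apply: ereal_inf_lbound; exists z => //; split; [exact: lt_le_trans H1 ab | exact: lt_le_trans H2 ab].
have peierls_lb : forall x, ((u y - u x)%:E <= peierls phi x y)%E.
  move=> x; rewrite /peierls lim_noninc; last exact: Gmono.
  apply/lee_addgt0Pr => d d0.
  have [dx dx0 Hx] := ucont x (d / 2) (divr_gt0 d0 (ltr0n _ 2)).
  have [dy dy0 Hy] := ucont y (d / 2) (divr_gt0 d0 (ltr0n _ 2)).
  have m0 : 0 < Num.min dx dy by rewrite lt_min dx0 dy0.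
  have H : ((u y - u x - d)%:E <= limn_einf (fun n =>
      ereal_inf [set (birk phi n z)%:E | z in Bset x y n (Num.min dx dy)]))%E.
    apply: einf_ge => n; apply: le_ereal_inf_tmp => _ [z [H1 H2] <-].
    rewrite lee_fin; have := birk_lb n z.
    move: H1 H2; rewrite !lt_min => /andP[/Hx h1 _] /andP[_].
    rewrite dX_sym => /Hy h2.
    move: h1 h2; rewrite !ltr_norml => /andP[? ?] /andP[? ?]; lra.
  rewrite -(subrK d (u y - u x)) EFinD; apply: leeD (lexx _); apply: le_trans H _.
  by apply: ereal_sup_ubound; exists (Num.min dx dy).
have [x0 Hx0] := @cluster_seq R yb.
have peierls_ub : (peierls phi x0 y <= (u y - u x0)%:E)%E.
  rewrite /peierls lim_noninc; last exact: Gmono.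
  apply: ge_ereal_sup => _ [eps eps0 <-].
  apply/lee_addgt0Pr => d d0.
  have [dd dd0 Hd] := ucont x0 d d0.
  apply: einf_le => N.
  have [|n [Nn Hn]] := Hx0 (Num.min eps dd) _ N; first by rewrite lt_min eps0 dd0.
  exists n; split => //.
  apply: (@le_trans _ _ ((birk phi n (yb n))%:E)).
    apply: ereal_inf_lbound; exists (yb n) => //.
    move: Hn; rewrite lt_min => /andP[h1 _]; split => //.
    by have := yb_shift n 0%N; rewrite add0n => ->; rewrite dX_refl.
  have := yb_birk n 0%N; rewrite add0n => ->.
  rewrite -EFinD lee_fin.
  move: Hn; rewrite lt_min => /andP[_ /Hd]; rewrite ltr_norml => /andP[? ?].
  rewrite /yb /=; lra.
have aub : aubry phi x0.
  rewrite /aubry /mane /= lim_noninc; last first.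
    move=> a b a0 ab; apply: le_ereal_inf_tmp => r [n [z [n0 [[H1 H2] ->]]]].
    apply: ereal_inf_lbound; exists n, z; split => //; split => //.
    by split; [exact: lt_le_trans H1 ab | exact: lt_le_trans H2 ab].
  apply/eqP; rewrite eq_le; apply/andP; split.
    apply: ge_ereal_sup => _ [eps eps0 <-].
    apply/lee_addgt0Pr => d d0; rewrite add0e.
    have [dd dd0 Hd] := ucont x0 (d / 2) (divr_gt0 d0 (ltr0n _ 2)).
    have m0 : 0 < Num.min eps dd by rewrite lt_min eps0 dd0.
    have [k [_ Hk]] := Hx0 _ m0 0%N.
    have [l [kl Hl]] := Hx0 _ m0 k.+1.
    have ekl : (k + (l - k))%N = l by rewrite subnKC // ltnW.
    have eyb : yb l = yb (k + (l - k))%N by rewrite ekl.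
    apply: (@le_trans _ _ ((birk phi (l - k) (yb l))%:E)).
      apply: ereal_inf_lbound; exists (l - k)%N, (yb l).
      split; first by rewrite subn_gt0.
      split => //.
      move: Hk Hl; rewrite !lt_min => /andP[hk1 _] /andP[hl1 _].
      by split => //; rewrite [X in iter _ _ X]eyb yb_shift dX_sym.
    rewrite eyb yb_birk ekl.
    move: Hk Hl; rewrite !lt_min => /andP[_ hk] /andP[_ hl].
    have := Hd _ hk; have := Hd _ hl.
    rewrite lee_fin !ltr_norml => /andP[? ?] /andP[? ?]; lra.
  apply/lee_addgt0Pr => d d0.
  have [dd dd0 Hd] := ucont x0 (d / 2) (divr_gt0 d0 (ltr0n _ 2)).
  have H : ((- d)%:E <= ereal_inf [set r | exists n, exists z, (0 < n)%N /\
         Bset x0 x0 n dd z /\ r = (birk phi n z)%:E])%E.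
    apply: le_ereal_inf_tmp => r [n [z [n0 [[H1 H2] ->]]]].
    rewrite lee_fin; have := birk_lb n z.
    move: H2; rewrite dX_sym => /Hd h2; move: H1 => /Hd h1.
    move: h1 h2; rewrite !ltr_norml => /andP[? ?] /andP[? ?]; lra.
  apply: (@le_trans _ _ ((- d)%:E + d%:E)%E); first by rewrite -EFinD addNr.
  apply: leeD (lexx _); apply: le_trans H _.
  by apply: ereal_sup_ubound; exists dd.
apply/eqP; rewrite eq_le; apply/andP; split.
  apply: le_ereal_inf_tmp => _ [x _ <-].
  rewrite -(subrK (u x) (u y)) EFinD; exact: leeD (peierls_lb x) (lexx _).
apply: (@le_trans _ _ (peierls phi x0 y + (u x0)%:E)%E).
  by apply: ereal_inf_lbound; exists x0.
rewrite -(subrK (u x0) (u y)) EFinD; exact: leeD peierls_ub (lexx _).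
Qed.
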